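(* In the setting of the context, for every compact set $B\subset\mathrm{G}/\Gamma_i$ there exists $C<0$ such that whenever $k\in\mathrm{K}$, $a\in\mathrm{A}^+_{\mathrm{M}_{\mathscr{I}_0}}$, $b\in\mathrm{A}_{\mathscr{I}_0}$ and $\log a+\log b\notin\mathcal{C}_C$, the image of $kabG_{\mathrm{hor}}$ in $\mathrm{G}/\Gamma_i$ does not meet $B$.
   Context: $N\ge2$, $\mathrm{G}=\mathrm{SL}_N(\mathbb{R})$, $\mathrm{K}=\mathrm{SO}_N(\mathbb{R})$. $\mathscr{I}_0=\{I_1,\dots,I_{k_0}\}$: partition of $\{1,\dots,N\}$ into nonempty consecutive blocks; $i\sim j$ iff same block. $\mathrm{U}_{\mathscr{I}_0}:=\{g:(\mathrm{id}-g)\mathbb{R}^{I_k}\subset\mathbb{R}^{I_1\cup\dots\cup I_{k-1}}\forall k\}$, $G_{\mathrm{hor}}$ the stabilizer of $\mathrm{U}_{\mathscr{I}_0}\mathrm{K}/\mathrm{K}$ in $\mathrm{G}$. $\Gamma$: lattice commensurable with $\mathrm{SL}_N(\mathbb{Z})$, $\Gamma'\le\Gamma$ neat of finite index, $q_i\in\Gamma$, $\Gamma_i:=q_i^{-1}\Gamma'q_i$. $\mathrm{A}_{\mathscr{I}_0}$: positive diagonal determinant-1 matrices constant on blocks. $\mathrm{A}^+_{\mathrm{M}_{\mathscr{I}_0}}$: positive diagonal $a$ with $\prod_{i\in I_k}a_i=1$ for all $k$ and $a_i\ge a_j$ for $i<j$, $i\sim j$. For $C\in\mathbb{R}$, $\mathcal{C}_C$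 is the set of traceless real diagonal $\mathrm{diag}(x_1,\dots,x_N)$ with $x_i-x_j\ge\max\{0,C\}$ whenever $i<j$ lie in the same block, and $\sum_{i\in I_1\cup\dots\cup I_k}x_i\ge C$ for all $1\le k<k_0$. *)

(* Defs.v *)
From HB Require Import structures.
From mathcomp Require Import all_boot all_order all_algebra.
From mathcomp Require Import all_classical all_reals all_analysis.
From mathcomp Require Import finmap complex.
Set Implicit Arguments. Unset Strict Implicit. Unset Printing Implicit Defensive.
Import Order.TTheory GRing.Theory Num.Theory.
Import numFieldTopology.Exports.
Local Open Scope classical_set_scope.
Local Open Scope ring_scope.

Section Defs.
Context {R : realType} {N : nat}.
Notation M := ('M[R]_N).

Definition SLN : set M := [set g | \det g = 1].
Definition SON : set M := [set k | k^T *m k = 1%:M /\ \det k = 1].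
Definition SLNZ : set M :=
  [set g | \det g = 1 /\ forall i j, g i j \is a Num.int].

Definition is_subgroup (H : set M) : Prop :=
  H `<=` SLN /\ H 1%:M /\
  (forall x y, H x -> H y -> H (x *m y)) /\
  (forall x, H x -> H (invmx x)).

Definition finite_index (H L : set M) : Prop :=
  exists s : seq M, (forall t, t \in s -> L t) /\
    forall g, L g -> exists2 t, t \in s & H (invmx t *m g).

Definition commensurable_SLNZ (Gam : set M) : Prop :=
  finite_index (Gam `&` SLNZ) Gam /\ finite_index (Gam `&` SLNZ) SLNZ.

Definition eigenvalue_C (g : M) (z : R[i]) : Prop :=
  root (char_poly (map_mx (fun x : R => (x%:C)%C) g)) z.

Definition neat (H : set M) : Prop :=
  forall g, H g ->
  forall s : seq (R[i] * int), (forall p, p \in s -> eigenvalue_C g p.1) ->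
  let z := \prod_(p <- s) (p.1 ^ p.2) in
  (exists m : nat, (0 < m)%N /\ z ^+ m = 1) -> z = 1.

Definition conj_sub (H : set M) (q : M) : set M :=
  [set g | exists h, H h /\ g = invmx q *m h *m q].

(* A subset of G/Gam is represented by its preimage B in G (a right
   Gam-invariant subset of G).  Compactness in the quotient topology:
   open subsets of G/Gam correspond to Gam-saturated relatively open
   subsets O `&` G of G, O open in M_N(R). *)
Definition quot_compact (Gam : set M) (B : set M) : Prop :=
  B `<=` SLN /\
  (forall x g, B x -> Gam g -> B (x *m g)) /\
  forall (I : choiceType) (O : I -> set M),
    (forall i, open (O i)) ->
    (forall i x g, SLN x -> Gam g -> O i x -> O i (x *m g)) ->
    B `<=` \bigcup_i O i ->
    exists D : {fset I}, B `<=` \bigcup_(i in [set` D]) O i.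

(* Partition of {0..N-1} into nonempty consecutive blocks, given by the
   block index function blk (block I_{k+1} = blk^-1(k)). *)
Definition consecutive_blocks (blk : 'I_N -> nat) : Prop :=
  (forall i : 'I_N, nat_of_ord i = 0%N -> blk i = 0%N) /\
  (forall i j : 'I_N, (i <= j)%N -> (blk i <= blk j <= blk i + (j - i))%N).

Definition nblocks (blk : 'I_N -> nat) : nat := (\max_(i : 'I_N) blk i).+1.

Definition is_diag (a : M) : Prop := forall i j, i != j -> a i j = 0.

Definition U_I (blk : 'I_N -> nat) : set M :=
  [set g | SLN g /\ forall i j, (blk j <= blk i)%N -> g i j = (i == j)%:R].

Definition UK (blk : 'I_N -> nat) : set M :=
  [set x | exists u k, U_I blk u /\ SON k /\ x = u *m k].

(* G_hor : stabilizer in G of U K / K (for the left action on G/K),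
   i.e. h U K = U K *)
Definition G_hor (blk : 'I_N -> nat) : set M :=
  [set h | SLN h /\ [set x | exists y, UK blk y /\ x = h *m y] = UK blk].

Definition A_I (blk : 'I_N -> nat) : set M :=
  [set b | is_diag b /\ (forall i, 0 < b i i) /\ \det b = 1 /\
           forall i j, blk i = blk j -> b i i = b j j].

Definition Aplus_M (blk : 'I_N -> nat) : set M :=
  [set a | is_diag a /\ (forall i, 0 < a i i) /\
           (forall k : nat, \prod_(i : 'I_N | blk i == k) a i i = 1) /\
           forall i j : 'I_N, (i < j)%N -> blk i = blk j -> a j j <= a i i].

Definition diag_log (a : M) : M := \matrix_(i, j) (if i == j then ln (a i i) else 0).

Definition cone_C (blk : 'I_N -> nat) (C : R) : set M :=
  [set X | is_diag X /\ \tr X = 0 /\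
     (forall i j : 'I_N, (i < j)%N -> blk i = blk j ->
        Num.max 0 C <= X i i - X j j) /\
     (forall k : nat, (1 <= k < nblocks blk)%N ->
        C <= \sum_(i : 'I_N | (blk i < k)%N) X i i)].

End Defs.

(* Main.v *)
Require Import Defs.
From HB Require Import structures.
From mathcomp Require Import all_boot all_order all_algebra.
From mathcomp Require Import all_classical all_reals all_analysis.
From mathcomp Require Import finmap complex.
From mathcomp Require Import fingroup perm.
From mathcomp Require Import zify ring lra.
Import Order.TTheory GRing.Theory Num.Theory.
Import numFieldTopology.Exports.
Local Open Scope classical_set_scope.
Local Open Scope ring_scope.
Set Implicit Arguments. Unset Strict Implicit.
Lemma det_bound (R0 : realType) n (A : 'M[R0]_n) (m : R0) : 0 <= m ->
  (forall i j, `|A i j| <= m) -> `|\det A| <= (n`!)%:R * m ^+ n.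
Proof.
move=> m0 Hm; rewrite /determinant.
apply: le_trans (ler_norm_sum _ _ _) _.
have -> : (n`!)%:R * m ^+ n = \sum_(s : 'S_n) m ^+ n.
  by rewrite sumr_const card_Sn mulr_natl.
apply: ler_sum => s _.
rewrite normrM normrX normrN normr1 expr1n mul1r normr_prod.
rewrite -[X in m ^+ X](card_ord n) -prodr_const.
apply: ler_prod => i _; rewrite normr_ge0 /=; exact: Hm.
Qed.

Lemma det_mul_expand (R0 : realType) d N (A : 'M[R0]_(d, N)) (B : 'M[R0]_(N, d)) :
  \det (A *m B) = \sum_(f : {ffun 'I_d -> 'I_N})
     (\prod_i A i (f i)) * \det (rowsub f B).
Proof.
rewrite /determinant.
under eq_bigr => s _.
  under eq_bigr => i _ do rewrite mxE.
  rewrite bigA_distr_bigA big_distrr /=.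
over.
rewrite exchange_big /=; apply: eq_bigr => f _.
rewrite big_distrr /=; apply: eq_bigr => s _.
rewrite mulrCA; congr (_ * _).
rewrite -big_split /=; apply: eq_bigr => i _.
by rewrite mxE.
Qed.

Lemma det_int (R0 : realType) n (A : 'M[R0]_n) : (forall i j, A i j \is a Num.int) ->
  \det A \is a Num.int.
Proof.
move=> H; rewrite /determinant; apply: rpred_sum => s _.
apply: rpredM; first by rewrite rpredX // rpredN rpred1.
by apply: rpred_prod => i _; apply: H.
Qed.

Section E.
Variable R : realType.
Variable N : nat.
Local Notation M := 'M[R]_N.

Lemma norm_entry m n (A : 'M[R]_(m, n)) i j : `|A i j| <= `|A|.
Proof.
rewrite [leRHS]/Num.Def.normr/= mx_normrE.
by apply: le_trans (le_bigmax _ _ (i, j)).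
Qed.

Lemma norm_le m n (A : 'M[R]_(m, n)) c : 0 <= c -> (forall i j, `|A i j| <= c) -> `|A| <= c.
Proof.
move=> c0 H; rewrite [leLHS]/Num.Def.normr/= mx_normrE.
by apply: bigmax_le => // -[i j] _; apply: H.
Qed.

Lemma norm_mul (A B : M) : `|A *m B| <= N%:R * `|A| * `|B|.
Proof.
apply: norm_le => [|i j]; first by rewrite !mulr_ge0.
rewrite mxE; apply: le_trans (ler_norm_sum _ _ _) _.
rewrite -mulrA mulr_natl -[X in _ *+ X](card_ord N) -sumr_const.
apply: ler_sum => l _; rewrite normrM.
by apply: ler_pM => //; apply: norm_entry.
Qed.

Lemma ball_mx (x y : M) e : ball x e y <-> `|x - y| < e.
Proof. by rewrite mx_norm_ball. Qed.

Lemma nbhs_mulr (t : M) y (A : set M) : nbhs (y *m t) A -> nbhs y [set z | A (z *m t)].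
Proof.
move=> /nbhs_ballP [e e0 He]; apply/nbhs_ballP.
have hp : 0 < N%:R * `|t| + 1 by rewrite ltr_wpDl // mulr_ge0.
exists (e / (N%:R * `|t| + 1)); first by apply: divr_gt0.
move=> z /ball_mx hz; apply: He; apply/ball_mx.
rewrite -mulmxBl; apply: le_lt_trans (norm_mul _ _) _.
have h0 : 0 <= `|y - z| by [].
have : `|y - z| * (N%:R * `|t| + 1) < e by rewrite -ltr_pdivlMr.
have : 0 <= N%:R * `|t| by rewrite mulr_ge0.
move=> h1 h2; nra.
Qed.


Lemma rowsub_mulmx m n p q (f : 'I_q -> 'I_m) (A : 'M[R]_(m, n)) (B : 'M[R]_(n, p)) :
  rowsub f (A *m B) = rowsub f A *m B.
Proof. by rewrite (rowsubE f (A *m B)) (rowsubE f A) mulmxA. Qed.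

Definition intmx m n (V : 'M[R]_(m, n)) := forall i j, V i j \is a Num.int.
Arguments intmx {m n}.
Definition nondeg d (V : 'M[R]_(N, d)) := exists f : 'I_d -> 'I_N, \det (rowsub f V) != 0.
Arguments nondeg {d}.
Definition Pset (n : nat) : set M := [set z : M | SLN z -> forall d, (d <= N)%N ->
  forall V : 'M[R]_(N, d), intmx V -> nondeg V ->
  exists f : 'I_d -> 'I_N, (n.+1%:R)^-1 <= `|\det (rowsub f (z *m V))|].

Lemma intmx_mul {m n p} {A : 'M[R]_(m, n)} {B : 'M[R]_(n, p)} :
  intmx A -> intmx B -> intmx (A *m B).
Proof.
by move=> hA hB i j; rewrite mxE; apply: rpred_sum => l _; apply: rpredM.
Qed.

Lemma Pset_mul {n} {dl : M} : intmx dl -> \det dl = 1 -> forall {z}, Pset n z -> Pset n (z *m dl).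
Proof.
move=> hi hdet z hz hz' d hd V hV [f0 hf0].
have zS : SLN z.
  by move: hz'; rewrite /SLN /= det_mulmx hdet mulr1.
have nd : nondeg (dl *m V).
  apply: contrapT => hn.
  have uD : dl \in unitmx by rewrite unitmxE hdet unitr1.
  have e : rowsub f0 V = rowsub f0 (invmx dl) *m (dl *m V).
    by rewrite -rowsub_mulmx mulKmx.
  move: hf0; rewrite e det_mul_expand big1 ?eqxx // => f _.
  have -> : \det (rowsub f (dl *m V)) = 0.
    by apply/eqP; apply: contrapT => h; apply: hn; exists f; apply/negP.
  by rewrite mulr0.
have [f hf] := hz zS d hd (dl *m V) (intmx_mul hi hV) nd.
by exists f; rewrite -mulmxA.
Qed.

Lemma inv_entry_bound (z : M) (m : R) : 0 <= m -> \det z = 1 ->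
  (forall i j, `|z i j| <= m) -> forall i j, `|invmx z i j| <= (N.-1`!)%:R * m ^+ N.-1.
Proof.
move=> m0 hz hm i j.
rewrite /invmx unitmxE hz unitr1 invr1 scale1r !mxE /cofactor normrM normrX normrN normr1 expr1n mul1r.
by apply: det_bound => // p q; rewrite !mxE.
Qed.

Lemma pow_bound (b : R) d : 0 <= b -> (d <= N)%N ->
  (N ^ d)%:R * b ^+ d <= ((N%:R + 1) * (b + 1)) ^+ N.
Proof.
move=> b0 hd.
rewrite natrX exprMn; apply: ler_pM; rewrite ?exprn_ge0 //.
  apply: le_trans (ler_weXn2l _ hd).
    by apply: lerXn2r; rewrite ?nnegrE ?ler0n ?addr_ge0 // lerDl.
  by rewrite lerDr.
apply: le_trans (ler_weXn2l _ hd).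
  by apply: lerXn2r; rewrite ?nnegrE ?addr_ge0 // lerDl.
by rewrite lerDr.
Qed.

Lemma KAL (x : M) : SLN x -> exists n, nbhs x (Pset n).
Proof.
move=> hx.
pose m := `|x| + 1.
have m0 : 0 <= m by rewrite /m addr_ge0.
pose M1 := (N.-1`!)%:R * m ^+ N.-1.
have M10 : 0 <= M1 by rewrite /M1 mulr_ge0 // exprn_ge0.
pose K := ((N%:R + 1) * (M1 + 1)) ^+ N.
have K0 : 0 <= K by rewrite /K exprn_ge0 // mulr_ge0 // addr_ge0.
exists (Num.bound K).
apply/nbhs_ballP; exists 1; first exact: ltr01.
move=> z /ball_mx hz hzS d hd V hV [f0 hf0].
have hzm : forall i j, `|z i j| <= m.
  move=> i j; have -> : z i j = x i j - (x - z) i j by rewrite !mxE opprB addrC subrK.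
  apply: (le_trans (ler_normB (x i j) ((x - z) i j))); rewrite /m; apply: lerD; first exact: norm_entry.
  by apply: le_trans (ltW hz); apply: norm_entry.
have hinv := inv_entry_bound m0 hzS hzm.
apply: contrapT => hn.
have H : forall f : 'I_d -> 'I_N, `|\det (rowsub f (z *m V))| < (Num.bound K).+1%:R^-1.
  by move=> f; rewrite ltNge; apply/negP => h; apply: hn; exists f.
have h1 : 1 <= `|\det (rowsub f0 V)|.
  apply: norm_intr_ge1 hf0; apply: det_int => i j; rewrite mxE; exact: hV.
have uz : z \in unitmx by rewrite unitmxE hzS unitr1.
have e : rowsub f0 V = rowsub f0 (invmx z) *m (z *m V) by rewrite -rowsub_mulmx mulKmx.
move: h1; rewrite e det_mul_expand => h1.
have h2 : `|\sum_(f : {ffun 'I_d -> 'I_N}) (\prod_i rowsub f0 (invmx z) i (f i)) *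
              \det (rowsub f (z *m V))| <=
          \sum_(f : {ffun 'I_d -> 'I_N}) M1 ^+ d * (Num.bound K).+1%:R^-1.
  apply: le_trans (ler_norm_sum _ _ _) _; apply: ler_sum => f _.
  rewrite normrM; apply: ler_pM => //; last exact: ltW.
  rewrite normr_prod -[X in M1 ^+ X](card_ord d) -prodr_const.
  by apply: ler_prod => i _; rewrite normr_ge0 /= mxE.
rewrite sumr_const card_ffun !card_ord in h2.
have h3 : (N ^ d)%:R * M1 ^+ d <= K := pow_bound M10 hd.
have h4 : K < (Num.bound K).+1%:R.
  apply: lt_le_trans (archi_boundP K0) _; by rewrite ler_nat.
have hb : 0 < (Num.bound K).+1%:R :> R by rewrite ltr0n.
have : (1 : R) < 1.
  apply: le_lt_trans h1 _; apply: le_lt_trans h2 _.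
  rewrite (_ : M1 ^+ d / _ *+ N ^ d = (N ^ d)%:R * M1 ^+ d / (Num.bound K).+1%:R); last by rewrite -mulrA mulr_natl.
  rewrite ltr_pdivrMr // mul1r.
  by apply: le_lt_trans h3 h4.
by rewrite ltxx.
Qed.

Definition Wset n : set M := [set y | nbhs y (Pset n)].

Lemma Pset_mono n n' : (n <= n')%N -> Pset n `<=` Pset n'.
Proof.
move=> hn z hz hzS d hd V hV nd; have [f hf] := hz hzS d hd V hV nd.
exists f; apply: le_trans hf; rewrite lef_pV2 ?posrE ?ltr0n // ler_nat; by [].
Qed.

Lemma Wset_mono n n' : (n <= n')%N -> Wset n `<=` Wset n'.
Proof. by move=> hn y; apply: filterS; apply: Pset_mono. Qed.

Lemma Wset_mul {n} {dl : M} : intmx dl -> \det dl = 1 -> forall {y}, Wset n y -> Wset n (y *m dl).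
Proof.
move=> hi hdet y hy.
have uD : dl \in unitmx by rewrite unitmxE hdet unitr1.
have : nbhs (y *m dl *m invmx dl) (Pset n) by rewrite mulmxK.
move/nbhs_mulr; apply: filterS => z hz.
by have := Pset_mul hi hdet hz; rewrite mulmxKV.
Qed.

Lemma nbhs_list n (s : seq M) y : (forall t, t \in s -> Wset n (y *m t)) ->
  nbhs y [set z | forall t, t \in s -> Wset n (z *m t)].
Proof.
elim: s => [|t s IH] H.
  by apply: filterE => z t; rewrite in_nil.
have h1 : nbhs y [set z | Wset n (z *m t)].
  apply: nbhs_mulr; apply: nbhs_interior; apply: H; exact: mem_head.
have h2 := IH (fun t' ht' => H t' (@mem_behead _ (t :: s) t' ht')).
apply: filterS (filterI h1 h2) => z [hz1 hz2] t'; rewrite in_cons => /orP [/eqP -> //|].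
exact: hz2.
Qed.

Lemma compact_bound (Gam B : set M) (s : seq M)
  (hB : quot_compact Gam B)
  (hs : forall t, t \in s -> Gam t)
  (hSL : forall g, Gam g -> \det g = 1)
  (h1 : Gam 1%:M)
  (hgrp : forall g t, Gam g -> Gam t -> Gam (g *m t))
  (hidx : forall g, Gam g -> exists2 t, t \in s & (intmx (invmx t *m g) /\ \det (invmx t *m g) = 1)) :
  exists n, forall b, B b -> Pset n b.
Proof.
have [BS [Binv Bcpt]] := hB.
pose O n := [set y | forall t, t \in s -> Wset n (y *m t)].
have Omono : forall n n', (n <= n')%N -> O n `<=` O n'.
  by move=> n n' hn y hy t ht; apply: Wset_mono hn _ (hy t ht).
have Oopen : forall n, open (O n).
  by move=> n; rewrite openE => y hy; apply: nbhs_list.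
have Oinv : forall n x g, SLN x -> Gam g -> O n x -> O n (x *m g).
  move=> n x g hx hg hO t ht.
  have [t' ht' [hi hd]] := hidx (g *m t) (hgrp g t hg (hs t ht)).
  have ut' : t' \in unitmx by rewrite unitmxE hSL ?unitr1 //; apply: hs.
  have -> : x *m g *m t = x *m t' *m (invmx t' *m (g *m t)).
    by rewrite -[RHS]mulmxA mulKVmx // mulmxA.
  by apply: Wset_mul => //; apply: hO.
have Ocov : B `<=` \bigcup_n O n.
  move=> b hb.
  suff [n hn] : exists n, forall t, t \in s -> Wset n (b *m t) by exists n.
  elim: s hs {hidx O Omono Oopen Oinv} => [|t s IH] hs'.
    by exists 0%N => t; rewrite in_nil.
  have [n1 hn1] := IH (fun t' ht' => hs' t' (@mem_behead _ (t :: s) t' ht')).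
  have [n2 hn2] := KAL (BS _ (Binv b t hb (hs' t (mem_head _ _)))).
  exists (maxn n1 n2) => t'; rewrite in_cons => /orP [/eqP ->|ht'].
    by apply: Wset_mono (leq_maxr _ _) _ hn2.
  by apply: Wset_mono (leq_maxl _ _) _ (hn1 t' ht').
have [D HD] := Bcpt nat O Oopen Oinv Ocov.
exists (\max_(i <- D) i) => b hb.
have [i hi hOi] := HD b hb.
have hOb : O (\max_(i <- D) i) b.
  by apply: Omono hOi; apply: leq_bigmax_seq.
have [t0 ht0 [hi0 hd0]] := hidx 1%:M h1.
rewrite mulmx1 in hi0 hd0.
have ut0 : t0 \in unitmx by rewrite unitmxE hSL ?unitr1 //; apply: hs.
have := Wset_mul hi0 hd0 (hOb t0 ht0); rewrite mulmxK //.
exact: nbhs_singleton.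
Qed.

End E.

Section B.
Variable R : realType.
Variable N : nat.
Variable blk : 'I_N -> nat.
Local Notation M := 'M[R]_N.

Definition Uprop (v : M) := forall i j, (blk j <= blk i)%N -> v i j = (i == j)%:R.

Lemma sum_delta_l (F : 'I_N -> R) i : \sum_l (i == l)%:R * F l = F i.
Proof.
rewrite (bigD1 i) //= eqxx mul1r big1 ?addr0 // => l /negbTE.
by rewrite eq_sym => ->; rewrite mul0r.
Qed.

Lemma sum_delta_r (F : 'I_N -> R) i : \sum_l F l * (l == i)%:R = F i.
Proof.
rewrite (bigD1 i) //= eqxx mulr1 big1 ?addr0 // => l /negbTE ->.
by rewrite mulr0.
Qed.

Definition Mx := (\max_(i : 'I_N) blk i).+1.
Lemma blk_lt_Mx i : (blk i < Mx)%N.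
Proof. by rewrite /Mx ltnS; apply: (leq_bigmax i). Qed.

Lemma Uprop_mul u v : Uprop u -> Uprop v -> Uprop (u *m v).
Proof.
move=> Hu Hv i j hji; rewrite mxE.
rewrite (eq_bigr (fun l => (i == l)%:R * v l j)); first by rewrite sum_delta_l Hv.
move=> l _; case: (leqP (blk l) (blk i)) => hl; first by rewrite Hu.
rewrite Hv; last by apply: leq_trans hji (ltnW hl).
have -> : (l == j) = false.
  by apply/negbTE; apply/eqP => e; move: hl; rewrite e ltnNge hji.
have -> : (i == l) = false.
  by apply/negbTE; apply/eqP => e; move: hl; rewrite e ltnn.
by rewrite /= ?mulr0 ?mul0r.
Qed.

Lemma Uprop_inv u : Uprop u -> u \in unitmx -> Uprop (invmx u).
Proof.
move=> Hu uU.
suff H : forall n i, (Mx - blk i <= n)%N -> forall j, (blk j <= blk i)%N ->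
   invmx u i j = (i == j)%:R.
  by move=> i j; apply: (H Mx); rewrite leq_subr.
elim=> [|n IH] i hi j hji.
  by move: hi; rewrite leqn0 subn_eq0 leqNgt blk_lt_Mx.
have e : (u *m invmx u) i j = (i == j)%:R by rewrite mulmxV // mxE.
rewrite -e mxE.
rewrite (eq_bigr (fun l => (i == l)%:R * invmx u l j)); first by rewrite sum_delta_l.
move=> l _; case: (leqP (blk l) (blk i)) => hl; first by rewrite Hu.
rewrite IH; last 2 first.
- by move: hi hl (blk_lt_Mx l) (blk_lt_Mx i); clear; lia.
- by apply: leq_trans hji (ltnW hl).
have -> : (l == j) = false.
  by apply/negbTE; apply/eqP => e'; move: hl; rewrite e' ltnNge hji.
have -> : (i == l) = false.
  by apply/negbTE; apply/eqP => e'; move: hl; rewrite e' ltnn.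
by rewrite /= ?mulr0 ?mul0r.
Qed.


Lemma Mt_entry (k : M) i j (t : R) a l :
  (k *m (1%:M + t *: delta_mx i j)) a l = k a l + t * (k a i * (l == j)%:R).
Proof.
rewrite mxE; under eq_bigr do rewrite !mxE.
rewrite (eq_bigr (fun m => k a m * (m == l)%:R + (i == m)%:R * (t * k a i * (l == j)%:R))).
  by rewrite big_split /= sum_delta_r sum_delta_l mulrA.
move=> m _; rewrite mulrDr; congr (_ + _).
by case: (m =P i) => [->|ne]; [rewrite eqxx|rewrite (_ : (i == m) = false); last by apply/negbTE/eqP => e; apply: ne]; case: (l == j) => /=; ring.
Qed.

Lemma MMT_formula (k : M) i j (t : R) : k *m k^T = 1%:M ->
  forall a b, ((k *m (1%:M + t *: delta_mx i j)) *m (k *m (1%:M + t *: delta_mx i j))^T) a b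
   = (a == b)%:R + t * (k a i * k b j + k a j * k b i) + t^+2 * (k a i * k b i).
Proof.
move=> kk a b.
have e1 : (k *m k^T) a b = (a == b)%:R by rewrite kk mxE.
rewrite mxE; under eq_bigr do rewrite [X in _ * X]mxE !Mt_entry.
rewrite (eq_bigr (fun l => k a l * k^T l b + (j == l)%:R *
   (t * (k a l * k b i + k a i * k b l) + t^+2 * (k a i * k b i)))).
  rewrite big_split /= sum_delta_l -e1 [(k *m _) a b]mxE; ring.
move=> l _; rewrite mxE.
by case: (l =P j) => [->|ne]; [rewrite eqxx|rewrite (_ : (j == l) = false); last by apply/negbTE/eqP => e; apply: ne]; rewrite /=; ring.
Qed.


Lemma k_struct (k : M) : k *m k^T = 1%:M ->
  (forall i j (t : R), (blk i < blk j)%N -> (t = 1 \/ t = -1) ->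
     exists v, Uprop v /\
       (k *m (1%:M + t *: delta_mx i j)) *m (k *m (1%:M + t *: delta_mx i j))^T
       = v *m v^T) ->
  forall r i, (blk i < blk r)%N -> k r i = 0.
Proof.
move=> kk Hyp.
suff H : forall n r, (Mx - blk r <= n)%N -> forall i, (blk i < blk r)%N -> k r i = 0.
  by move=> r i; apply: (H Mx); rewrite leq_subr.
elim=> [|n IH] r hr i hir.
  by move: hr; rewrite leqn0 subn_eq0 leqNgt blk_lt_Mx.
have IHs : forall s, (blk r < blk s)%N -> k s i = 0 /\ k s r = 0.
  move=> s hs; split; apply: IH => //;
  try by move: hr hs (blk_lt_Mx s) (blk_lt_Mx r); clear; lia.
  by apply: ltn_trans hir hs.
have key : forall t : R, (t = 1 \/ t = -1) ->
    t * (k r i * k r r + k r r * k r i) + t^+2 * (k r i * k r i) = 0.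
  move=> t ht; have [v [Hv E]] := Hyp i r t hir ht.
  have F := MMT_formula i r t kk.
  have sa : forall s, (blk r < blk s)%N -> forall l, v s l = (s == l)%:R.
    move=> s hs.
    have e1 : (v *m v^T) s s = 1.
      rewrite -E F eqxx; have [-> ->] := IHs s hs; rewrite /=; ring.
    have e2 : \sum_l (v s l * v s l) =
        \sum_l ((s == l)%:R * 1 + (blk s < blk l)%:R * (v s l * v s l)).
      apply: eq_bigr => l _; case: (leqP (blk l) (blk s)) => hl.
        rewrite Hv //.
        by case: (s == l); rewrite /=; ring.
      rewrite (_ : (s == l) = false); last first.
        by apply/negbTE/eqP => e; move: hl; rewrite e ltnn.
      rewrite /=; ring.
    rewrite big_split /= sum_delta_l in e2.
    have e3 : \sum_l (blk s < blk l)%:R * (v s l * v s l) = 0.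
      have : (v *m v^T) s s = \sum_l (v s l * v s l).
        by rewrite mxE; apply: eq_bigr => l _; rewrite mxE.
      rewrite e1 e2 => h; lra.
    move=> l; case: (leqP (blk l) (blk s)) => hl; first by rewrite Hv.
    have nn : forall m : 'I_N, true -> 0 <= (blk s < blk m)%:R * (v s m * v s m).
      by move=> m _; apply: mulr_ge0; [exact: ler0n | rewrite -expr2 sqr_ge0].
    have := psumr_eq0P nn e3 isT; move=> /(_ l).
    rewrite hl mul1r => /eqP; rewrite mulf_eq0 orbb => /eqP ->.
    rewrite (_ : (s == l) = false) //.
    by apply/negbTE/eqP => e; move: hl; rewrite e ltnn.
  have sb : forall s, (blk r < blk s)%N -> v r s = 0.
    move=> s hs.
    have e1 : (v *m v^T) r s = v r s.
      rewrite mxE; under eq_bigr do rewrite mxE (sa s hs).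
      rewrite (eq_bigr (fun l => (s == l)%:R * v r l)) ?sum_delta_l //.
      by move=> l _; rewrite mulrC eq_sym.
    rewrite -e1 -E F; have [-> ->] := IHs s hs.
    rewrite (_ : (r == s) = false) /=; first by ring.
    by apply/negbTE/eqP => e; move: hs; rewrite e ltnn.
  have sc : forall l, v r l = (r == l)%:R.
    move=> l; case: (leqP (blk l) (blk r)) => hl; first by rewrite Hv.
    rewrite sb // (_ : (r == l) = false) //.
    by apply/negbTE/eqP => e; move: hl; rewrite e ltnn.
  have e1 : (v *m v^T) r r = 1.
    rewrite mxE; under eq_bigr do rewrite mxE !sc.
    rewrite (eq_bigr (fun l => (r == l)%:R * 1)) ?sum_delta_l //.
    by move=> l _; case: (r == l); rewrite /= ?mulr1 ?mulr0.
  move: e1; rewrite -E F eqxx /= => h; lra.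
have h1 := key 1 (or_introl erefl).
have h2 := key (-1) (or_intror erefl).
have : k r i * k r i = 0 by lra.
by move/eqP; rewrite mulf_eq0 orbb => /eqP.
Qed.

End B.

Section D.
Variable R : realType.
Variables N d : nat.
Hypothesis hd : (d <= N)%N.
Local Notation M := 'M[R]_N.
Local Notation w := (widen_ord hd).

Definition Emx : 'M[R]_(N, d) := \matrix_(i, q) (i == w q)%:R.
Definition Gr (g : M) : 'M[R]_d := \matrix_(p, q) g (w p) (w q).
Definition pres (g : M) := forall r i : 'I_N, (d <= r)%N -> (i < d)%N -> g r i = 0.

Lemma pres_mul g1 g2 : pres g1 -> pres g2 -> pres (g1 *m g2).
Proof.
move=> h1 h2 r i hr hi; rewrite mxE big1 // => l _.
case: (ltnP l d) => hl; first by rewrite h1 // mul0r.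
by rewrite h2 // mulr0.
Qed.

Lemma sum_split_d (F : 'I_N -> R) : (forall l : 'I_N, (d <= l)%N -> F l = 0) ->
  \sum_l F l = \sum_(p < d) F (w p).
Proof.
move=> H.
rewrite (bigID (fun l : 'I_N => (l < d)%N)) /= [X in _ + X]big1; last first.
  by move=> l; rewrite -leqNgt; apply: H.
by rewrite addr0 big_ord_narrow.
Qed.

Lemma gE (g : M) : pres g -> g *m Emx = Emx *m Gr g.
Proof.
move=> hg; apply/matrixP => r q; rewrite !mxE.
under eq_bigr do rewrite mxE.
rewrite sum_delta_r.
under eq_bigr do rewrite !mxE.
rewrite -(sum_split_d (F := fun l => (r == l)%:R * g l (w q))) ?sum_delta_l //.
by move=> l hl; rewrite (hg l (w q) hl (ltn_ord q)) mulr0.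
Qed.

Lemma Gr_mul g1 g2 : pres g2 -> Gr (g1 *m g2) = Gr g1 *m Gr g2.
Proof.
move=> h2; apply/matrixP => p q; rewrite mxE [in LHS]mxE.
rewrite (sum_split_d (F := fun l => g1 (w p) l * g2 l (w q))).
  by rewrite mxE; apply: eq_bigr => j _; rewrite !mxE.
by move=> l hl; rewrite (h2 l (w q) hl (ltn_ord q)) mulr0.
Qed.

Lemma rowsub_mul m n (f : 'I_m -> 'I_N) (A : 'M[R]_(N, n)) (B : 'M[R]_(n, d)) :
  rowsub f (A *m B) = rowsub f A *m B.
Proof. by rewrite (rowsubE f (A *m B)) (rowsubE f A) mulmxA. Qed.

Lemma Gr_orth (k : M) : k^T *m k = 1%:M -> pres k -> `|\det (Gr k)| = 1.
Proof.
move=> kk hk.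
have e : (Gr k)^T *m Gr k = 1%:M.
  apply/matrixP => p q; rewrite mxE [RHS]mxE.
  transitivity ((k^T *m k) (w p) (w q)).
    rewrite [RHS]mxE (sum_split_d (F := fun l => k^T (w p) l * k l (w q))).
      by apply: eq_bigr => j _; rewrite !mxE.
    by move=> l hl; rewrite mxE (hk l (w p) hl (ltn_ord p)) mul0r.
  by rewrite kk mxE.
have := congr1 determinant e; rewrite det_mulmx det_tr det1 => e2.
have : `|\det (Gr k)| ^+ 2 == 1 by rewrite real_normK ?num_real // expr2 e2.
by rewrite sqrp_eq1 // => /eqP.
Qed.

Lemma Gr_unitri (u : M) : (forall p q : 'I_N, (q < p)%N -> u p q = 0) ->
  (forall p, u p p = 1) -> \det (Gr u) = 1.
Proof.
move=> hl hd1; rewrite -det_tr det_trig.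
  by rewrite big1 // => i _; rewrite !mxE hd1.
apply/forallP => i; apply/forallP => j; apply/implyP => hij.
by rewrite !mxE hl.
Qed.

Lemma Gr_diag (g : M) : (forall p q, p != q -> g p q = 0) ->
  \det (Gr g) = \prod_(p < d) g (w p) (w p).
Proof.
move=> hg; rewrite det_trig.
  by apply: eq_bigr => i _; rewrite mxE.
apply/forallP => i; apply/forallP => j; apply/implyP => hij.
rewrite mxE hg //; apply/eqP => e.
by move: hij; rewrite (_ : (i : nat) = j) ?ltnn //; move: (congr1 val e).
Qed.

Lemma orth_entry_le1 (k : M) : k^T *m k = 1%:M -> forall r c, `|k r c| <= 1.
Proof.
move=> kk r c.
have e : \sum_l k l c * k l c = 1.
  have := congr1 (fun A : M => A c c) kk; rewrite !mxE eqxx mulr1n => <-.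
  by apply: eq_bigr => l _; rewrite mxE.
have : k r c * k r c <= 1.
  rewrite -e (bigD1 r) //= lerDl; apply: sumr_ge0 => l _.
  by rewrite -expr2 sqr_ge0.
move=> h; rewrite ler_norml; apply/andP; split; nra.
Qed.

Lemma det_rowsub_bound (k : M) : k^T *m k = 1%:M ->
  forall f : 'I_d -> 'I_N, `|\det (rowsub f (k *m Emx))| <= (d`!)%:R.
Proof.
move=> kk f.
have := @det_bound R d (rowsub f (k *m Emx)) 1 ler01.
rewrite expr1n mulr1; apply => p q.
rewrite !mxE; under eq_bigr do rewrite mxE.
by rewrite sum_delta_r; apply: orth_entry_le1.
Qed.

End D.

Unset Implicit Arguments. Set Strict Implicit.

Section G.
Variable R : realType.
Variable N : nat.
Local Notation M := 'M[R]_N.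

Lemma det1_unit (g : M) : \det g = 1 -> g \in unitmx.
Proof. by move=> h; rewrite unitmxE h unitr1. Qed.

Lemma inv_int (g : M) : \det g = 1 -> intmx g -> intmx (invmx g).
Proof.
move=> hd hg i j; rewrite /invmx unitmxE hd unitr1 invr1 scale1r !mxE.
apply: rpredM; first by rewrite rpredX // rpredN rpred1.
by apply: det_int => p q; rewrite !mxE; apply: hg.
Qed.

Lemma det_inv1 (g : M) : \det g = 1 -> \det (invmx g) = 1.
Proof. by move=> h; rewrite det_inv h invr1. Qed.

Lemma reps (Gam Gs : set M) (s0 : seq M)
  (hS : forall g, Gam g -> \det g = 1)
  (hinv : forall g, Gam g -> Gam (invmx g))
  (hmul : forall g h, Gam g -> Gam h -> Gam (g *m h))
  (hGs : Gs `<=` Gam) :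
  exists s : seq M, (forall t, t \in s -> Gs t) /\
   forall g, Gs g -> forall t0, t0 \in s0 -> (Gam `&` SLNZ) (invmx t0 *m g) ->
     exists2 t, t \in s & (intmx (invmx t *m g) /\ \det (invmx t *m g) = 1).
Proof.
elim: s0 => [|t0 s0 [s [hs1 hs2]]].
  by exists [::]; split => // g _ t0; rewrite in_nil.
case: (pselect (exists g1, Gs g1 /\ (Gam `&` SLNZ) (invmx t0 *m g1))) => [[g1 [hg1 hH1]]|hno].
  exists (g1 :: s); split.
    by move=> t; rewrite in_cons => /orP [/eqP ->|]; [|apply: hs1].
  move=> g hg t; rewrite in_cons => /orP [/eqP ->|ht] hH; last first.
    have [t' ht' H'] := hs2 g hg t ht hH.
    by exists t' => //; rewrite in_cons ht' orbT.
  exists g1; first exact: mem_head.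
  have [hG1 [hd1 hi1]] := hH1; have [hG [hd hi]] := hH.
  have ug1 : g1 \in unitmx by apply: det1_unit; apply: hS; apply: hGs.
  have ut0 : t0 \in unitmx.
    have h2 : \det (invmx t0) = 1 by move: hd1; rewrite det_mulmx (hS _ (hGs _ hg1)) mulr1.
    by move: h2; rewrite det_inv => /(congr1 GRing.inv); rewrite invrK invr1; apply: det1_unit.
  have e : invmx g1 *m g = invmx (invmx t0 *m g1) *m (invmx t0 *m g).
    have uP : invmx t0 *m g1 \in unitmx by rewrite unitmx_mul unitmx_inv ut0 ug1.
    have eP : invmx t0 *m g = (invmx t0 *m g1) *m (invmx g1 *m g).
      by rewrite mulmxA (mulmxK ug1).
    by rewrite eP mulKmx.
  rewrite e; split.
    apply: intmx_mul => //; apply: inv_int => //.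
  by rewrite det_mulmx det_inv1 // hd mulr1.
exists s; split => // g hg t; rewrite in_cons => /orP [/eqP -> hH|ht hH].
  by exfalso; apply: hno; exists g.
exact: hs2 g hg t ht hH.
Qed.

Lemma SON1 : SON (1%:M : M).
Proof. by split; [rewrite trmx1 mulmx1 | exact: det1]. Qed.

Lemma U_I1 (blk : 'I_N -> nat) : U_I blk (1%:M : M).
Proof. by split; [exact: det1 | move=> i j _; rewrite mxE]. Qed.

Lemma U_I_elem (blk : 'I_N -> nat)
  (hmono : forall i j : 'I_N, (i <= j)%N -> (blk i <= blk j)%N)
  i j (t : R) : (blk i < blk j)%N -> U_I blk (1%:M + t *: delta_mx i j : M).
Proof.
move=> hij.
have ltij : (i < j)%N.
  rewrite ltnNge; apply/negP => h; have := hmono _ _ h; move: hij; clear; lia.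
have neij : (i == j) = false by apply/negbTE; apply/eqP => e; move: ltij; rewrite e ltnn.
split.
  rewrite /SLN /= -det_tr det_trig.
    rewrite big1 // => a _; rewrite !mxE eqxx.
    case: (a =P i) => [->|]; last by rewrite /= mulr0 addr0.
    by rewrite ?eqxx neij /= mulr0 addr0.
  apply/forallP => a; apply/forallP => b; apply/implyP => hab; rewrite !mxE.
  have -> : (b == a) = false by apply/negbTE/eqP => e; move: hab; rewrite e ltnn.
  case: (b =P i) => [ei|]; last by rewrite /= mulr0 addr0.
  case: (a =P j) => [ej|]; last by rewrite andbF /= mulr0 addr0.
  by move: hab ltij; rewrite ei ej; clear; lia.
move=> a b hab; rewrite !mxE.
case: (a =P i) => [ei|]; last by rewrite /= mulr0 addr0.
case: (b =P j) => [ej|]; last by rewrite andbF /= mulr0 addr0.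
by move: hab hij; rewrite ei ej; clear; lia.
Qed.

Lemma ghor_struct (blk : 'I_N -> nat)
  (hmono : forall i j : 'I_N, (i <= j)%N -> (blk i <= blk j)%N) (h : M) :
  G_hor blk h -> exists u k, U_I blk u /\ SON k /\ h = u *m k /\
    forall r i, (blk i < blk r)%N -> k r i = 0.
Proof.
move=> [hS hE].
have UK1 : forall g : M, U_I blk g -> UK blk g.
  by move=> g hg; exists g, 1%:M; split => //; split; [exact: SON1 | rewrite mulmx1].
have hUK : forall y : M, UK blk y -> UK blk (h *m y).
  by move=> y hy; rewrite -hE; exists y.
have [u [k [hu [hk eh]]]] : UK blk h.
  by rewrite -[h]mulmx1; apply: hUK; apply: UK1; exact: U_I1.
exists u, k; do 3 (split => //).
have uu : u \in unitmx by rewrite unitmxE (proj1 hu) unitr1.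
have kk1 : forall k1 : M, SON k1 -> k1 *m k1^T = 1%:M.
  by move=> k1 [h1 _]; apply: mulmx1C.
apply: (k_struct (kk1 _ hk)) => i j t hij ht.
have [u1 [k1 [hu1 [hk1 e1]]]] := hUK _ (UK1 _ (@U_I_elem blk hmono i j t hij)).
exists (invmx u *m u1); split.
  by apply: Uprop_mul; [apply: Uprop_inv; [exact: (proj2 hu)|] | exact: (proj2 hu1)].
have ek : k *m (1%:M + t *: delta_mx i j) = invmx u *m u1 *m k1.
  by rewrite -mulmxA -e1 eh -!mulmxA mulKmx.
by rewrite ek trmx_mul !trmx_mul -!mulmxA (mulmxA k1) (kk1 _ hk1) mul1mx.
Qed.

Lemma blk_prefix (blk : 'I_N -> nat)
  (hmono : forall i j : 'I_N, (i <= j)%N -> (blk i <= blk j)%N) (k0 : nat) :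
  exists d, (d <= N)%N /\ forall i : 'I_N, ((i : nat) < d)%N = (blk i < k0)%N.
Proof.
case: (pselect (exists i : 'I_N, ~~ (blk i < k0)%N)) => [[i0 hi0]|hno].
  case: (@arg_minnP _ i0 (fun i => ~~ (blk i < k0)%N) (fun i : 'I_N => nat_of_ord i) hi0) => i1 hi1 hmin.
  exists i1; split; first exact: ltnW (ltn_ord i1).
  move=> j; apply/idP/idP => hj.
    apply: contraTT hj => hj; rewrite -leqNgt; exact: hmin j hj.
  rewrite ltnNge; apply/negP => hle.
  have := hmono _ _ hle; move: hi1 hj; clear; lia.
exists N; split => // i; rewrite ltn_ord; apply/esym.
apply: contrapT => hi; apply: hno; exists i; apply/negP => h; apply: hi; exact: h.
Qed.

Lemma cone_fail (blk : 'I_N -> nat) (a b : M) (C : R) : C < 0 ->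
  Aplus_M blk a -> A_I blk b -> ~ cone_C blk C (diag_log a + diag_log b) ->
  exists k0 : nat, \sum_(i : 'I_N | (blk i < k0)%N) (diag_log a + diag_log b) i i < C.
Proof.
move=> C0 [ha1 [ha2 [ha3 ha4]]] [hb1 [hb2 [hb3 hb4]]] hn.
apply: contrapT => hk; apply: hn.
have Xii : forall i, (diag_log a + diag_log b) i i = ln (a i i) + ln (b i i).
  by move=> i; rewrite !mxE eqxx.
split.
  by move=> i j hij; rewrite !mxE (negbTE hij) addr0.
split.
  rewrite /mxtrace; under eq_bigr do rewrite Xii.
  rewrite big_split /=.
  have eb : \sum_i ln (b i i) = 0.
    have : expR (\sum_i ln (b i i)) = 1.
      rewrite expR_sum -[RHS]hb3 det_trig.
        by apply: eq_bigr => i _; rewrite lnK // posrE.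
      apply/forallP => i; apply/forallP => j; apply/implyP => hij.
      by rewrite hb1 //; apply/negP => /eqP e; move: hij; rewrite e ltnn.
    by move=> h; have := congr1 (@ln R) h; rewrite expRK ln1.
  have ea : \sum_i ln (a i i) = 0.
    have : expR (\sum_i ln (a i i)) = 1.
      rewrite expR_sum.
      rewrite (eq_bigr (fun i => a i i)); last by move=> i _; rewrite lnK // posrE.
      rewrite (partition_big (fun i : 'I_N => Ordinal (blk_lt_Mx blk i)) predT) //=.
      apply: big1 => j _.
      rewrite -[RHS](ha3 j); apply: eq_bigl => i.
      by rewrite /= -val_eqE.
    by move=> h; have := congr1 (@ln R) h; rewrite expRK ln1.
  by rewrite ea eb addr0.
split.
  move=> i j hij hb; rewrite (max_l (ltW C0)) !Xii subr_ge0 (hb4 i j hb) lerD2r.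
  by rewrite ler_ln ?posrE //; apply: ha4.
move=> k0 _; rewrite leNgt; apply/negP => h; apply: hk; by exists k0.
Qed.

End G.


Theorem lemma4p12 (R : realType) (N : nat) (hN : (2 <= N)%N)
  (blk : 'I_N -> nat) (hblk : consecutive_blocks blk)
  (Gam Gam' : set 'M[R]_N) (q : 'M[R]_N)
  (hGam : is_subgroup Gam) (hcomm : commensurable_SLNZ Gam)
  (hGam' : is_subgroup Gam') (hsub : Gam' `<=` Gam)
  (hfin : finite_index Gam' Gam) (hneat : neat Gam') (hq : Gam q)
  (B : set 'M[R]_N) (hB : quot_compact (conj_sub Gam' q) B) :
  exists C : R, C < 0 /\
    forall k a b : 'M[R]_N, SON k -> Aplus_M blk a -> A_I blk b ->
      ~ cone_C blk C (diag_log a + diag_log b) ->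
      forall h, G_hor blk h -> ~ B (k *m a *m b *m h).
Proof.
have hmono : forall i j : 'I_N, (i <= j)%N -> (blk i <= blk j)%N.
  by move=> i j hij; have /andP[] := (proj2 hblk) i j hij.
have [GS [G1 [Gmul Ginv]]] := hGam.
have [G'S [G'1 [G'mul G'inv]]] := hGam'.
have hS : forall g, Gam g -> \det g = 1 by move=> g /GS.
have uq : q \in unitmx by rewrite unitmxE hS // unitr1.
pose Gs := conj_sub Gam' q.
have GsSub : Gs `<=` Gam.
  move=> g [h0 [hh0 e0]]; rewrite e0; exact: (Gmul _ _ (Gmul _ _ (Ginv _ hq) (hsub _ hh0)) hq).
have Gs1 : Gs 1%:M by exists 1%:M; split => //; rewrite mulmx1 mulVmx.
have Gsmul : forall g t, Gs g -> Gs t -> Gs (g *m t).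
  move=> g t [h1 [hh1 ->]] [h2 [hh2 ->]]; exists (h1 *m h2); split; first exact: G'mul.
  by rewrite !mulmxA (mulmxK uq).
have [s0 [hs0 hidx0]] := proj1 hcomm.
have [s [hs hs2]] := @reps R N Gam Gs s0 hS Ginv Gmul GsSub.
have hidx : forall g, Gs g -> exists2 t, t \in s &
    (intmx (invmx t *m g) /\ \det (invmx t *m g) = 1).
  move=> g hg; have [t0 ht0 hH] := hidx0 g (GsSub _ hg).
  exact: hs2 g hg t0 ht0 hH.
have [n0 hn0] := compact_bound hB hs (fun g hg => hS g (GsSub g hg)) Gs1 Gsmul hidx.
pose P := (n0.+1)%:R * (N`!)%:R : R.
have P1 : 1 <= P.
  by rewrite /P -natrM ler1n muln_gt0 fact_gt0.
have P0 : 0 < P by apply: lt_le_trans P1; exact: ltr01.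
pose C := - (1 + ln P).
have C0 : C < 0.
  by rewrite /C oppr_lt0; apply: lt_le_trans (ltr01) _; rewrite lerDl ln_ge0.
exists C; split => // k a b hk ha hb hcone h hh hBx.
have [k0 hk0] := @cone_fail R N blk a b C C0 ha hb hcone.
have [d [hd hpre]] := @blk_prefix N blk hmono k0.
have [u [k' [hu [hk' [eh hk'0]]]]] := @ghor_struct R N blk hmono h hh.
have xS : SLN (k *m a *m b *m h) := proj1 hB _ hBx.
have intE : intmx (Emx R hd) by move=> i j; rewrite mxE; exact: natr_int.
have ndE : nondeg (Emx R hd).
  exists (widen_ord hd).
  have -> : rowsub (widen_ord hd) (Emx R hd) = 1%:M by apply/matrixP => p p2; rewrite !mxE.
  by rewrite det1 oner_neq0.
have [f hf] := hn0 _ hBx xS d hd (Emx R hd) intE ndE.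
have hlo : forall i : 'I_N, (i < d)%N -> (blk i < k0)%N by move=> i; rewrite hpre.
have hhi : forall r : 'I_N, (d <= r)%N -> (k0 <= blk r)%N.
  by move=> r; rewrite leqNgt hpre -leqNgt.
have presD : forall g : 'M[R]_N, is_diag g -> pres d g.
  move=> g hg r i hr hi; apply: hg; apply/eqP => e; move: hr hi; rewrite e; clear; lia.
have presA := presD a (proj1 ha).
have presB := presD b (proj1 hb).
have presU : pres d u.
  move=> r i hr hi; rewrite (proj2 hu).
    rewrite (_ : (r == i) = false) //; apply/negbTE/eqP => e; move: hr hi; rewrite e; clear; lia.
  have := hlo i hi; have := hhi r hr; clear; lia.
have presK : pres d k'.
  move=> r i hr hi; apply: hk'0; have := hlo i hi; have := hhi r hr; clear; lia.
pose g := a *m b *m u *m k'.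
have pg : pres d g by apply: pres_mul => //; apply: pres_mul => //; apply: pres_mul.
have ex : (k *m a *m b *m h) *m Emx R hd = (k *m Emx R hd) *m Gr hd g.
  by rewrite eh -[RHS]mulmxA -(gE hd pg) /g !mulmxA.
have dU : \det (Gr hd u) = 1.
  apply: Gr_unitri => [p p2 hqp|p].
    rewrite (proj2 hu); last by apply: hmono; apply: ltnW.
    by rewrite (_ : (p == p2) = false) //; apply/negbTE/eqP => e; move: hqp; rewrite e ltnn.
  by rewrite (proj2 hu) // eqxx.
have dK := Gr_orth hd (proj1 hk') presK.
have dA := Gr_diag hd (proj1 ha).
have dB := Gr_diag hd (proj1 hb).
have dR := det_rowsub_bound hd (proj1 hk) f.
pose Pa := \prod_(p < d) a (widen_ord hd p) (widen_ord hd p).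
pose Pb := \prod_(p < d) b (widen_ord hd p) (widen_ord hd p).
have Pa0 : 0 < Pa by apply: prodr_gt0 => p _; apply: (proj1 (proj2 ha)).
have Pb0 : 0 < Pb by apply: prodr_gt0 => p _; apply: (proj1 (proj2 hb)).
have edet : `|\det (rowsub f ((k *m a *m b *m h) *m Emx R hd))| =
    `|\det (rowsub f (k *m Emx R hd))| * (Pa * Pb).
  rewrite ex rowsub_mulmx det_mulmx /g (Gr_mul hd _ presK) (Gr_mul hd _ presU) (Gr_mul hd _ presB).
  rewrite !det_mulmx !normrM dK dU dA dB normr1 !mulr1 (ger0_norm (ltW Pa0)) (ger0_norm (ltW Pb0)).
  by [].
pose S := \sum_(i : 'I_N | (blk i < k0)%N) (diag_log a + diag_log b) i i.
have eS : expR S = Pa * Pb.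
  rewrite /S (eq_bigl (fun i : 'I_N => (i < d)%N)); last by move=> i; rewrite hpre.
  rewrite (big_ord_narrow hd) /= expR_sum /Pa /Pb -big_split /=.
  apply: eq_bigr => p _; rewrite !mxE eqxx expRD !lnK // posrE.
    exact: (proj1 (proj2 hb)).
  exact: (proj1 (proj2 ha)).
have hSC : expR S < expR C by rewrite ltr_expR.
have hfact : (d`!)%:R <= (N`!)%:R :> R by rewrite ler_nat leq_fact.
have e1 : expR C * P = expR (-1).
  rewrite -[X in _ * X](@lnK R P) ?posrE // -expRD /C; congr expR; ring.
have e2 : expR (-1) < 1 :> R by rewrite -[X in _ < X]expR0 ltr_expR; lra.
move: hf; rewrite edet => hf.
have hf2 : (n0.+1%:R)^-1 <= (d`!)%:R * expR S.
  apply: le_trans hf _; rewrite eS; apply: ler_wpM2r => //.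
  by rewrite mulr_ge0 // ltW.
have hu0 : 0 < (n0.+1)%:R :> R by rewrite ltr0n.
have h1 : 1 <= (n0.+1)%:R * ((d`!)%:R * expR S).
  by have := ler_wpM2l (ltW hu0) hf2; rewrite mulfV // gt_eqF.
have h2 : (d`!)%:R * expR S <= (N`!)%:R * expR C.
  apply: ler_pM => //; rewrite ?ler0n ?expR_ge0 //; exact: ltW.
have h3 : (n0.+1)%:R * ((d`!)%:R * expR S) <= (n0.+1)%:R * ((N`!)%:R * expR C).
  by apply: ler_wpM2l => //; exact: ltW.
have h4 : (n0.+1)%:R * ((N`!)%:R * expR C) = expR C * P by rewrite /P; ring.
lra.
Qed.
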